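(* Let $\mathbf{A}$ be an $n$-dimensional cyclic Leibniz algebra over $\mathbb{C}$ with a generator $a$ satisfying $$aa^n=\alpha_k a^k+\alpha_{k+1}a^{k+1}+\cdots+\alpha_n a^n$$ for some $2\le k\le n$ and $\alpha_k,\ldots,\alpha_n\in\mathbb{C}$ with $\alpha_k\neq 0$. Then: (i) every generator $x=c_1a+c_2a^2+\cdots+c_na^n$ ($c_i\in\mathbb{C}$) of $\mathbf{A}$ satisfies $$xx^n=c_1^{\,n-k+1}\alpha_k x^k+c_1^{\,n-k}\alpha_{k+1}x^{k+1}+\cdots+c_1\alpha_n x^n,$$ i.e. the coefficient of $x^{k+i}$ is $c_1^{\,n-k+1-i}\alpha_{k+i}$ for $0\le i\le n-k$; (ii) for each $c_1\in\mathbb{C}$ with $c_1\neq 0$, $\mathbf{A}$ has at least one generator $x=c_1a+c_2a^2+\cdots+c_na^n$ (with this first coordinate $c_1$) satisfying the displayed identity of (i).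
   Context: A (left) Leibniz algebra is a vector space with a bilinear product such that $x(yz)=(xy)z+y(xz)$ for all $x,y,z$. A cyclic Leibniz algebra is a Leibniz algebra generated by a single element. For an element $x$ set $x^1=x$ and $x^{j+1}=x\,x^j$. In an $n$-dimensional cyclic Leibniz algebra, an element $x$ is called a generator (cyclic generator) if $\{x,x^2,\ldots,x^n\}$ is a basis. *)

(* Defs.v *)
From HB Require Import structures.
From mathcomp Require Import all_boot all_order all_algebra.
From mathcomp Require Import reals.
From mathcomp.real_closed Require Import complex.
Set Implicit Arguments. Unset Strict Implicit. Unset Printing Implicit Defensive.
Import GRing.Theory.
Local Open Scope ring_scope.

Definition leibniz_algebra (K : fieldType) (V : vectType K) (mul : V -> V -> V) :=
  [/\ (forall (c : K) (x y z : V), mul (c *: x + y) z = c *: mul x z + mul y z),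
      (forall (c : K) (x y z : V), mul x (c *: y + z) = c *: mul x y + mul x z)
    & (forall x y z : V, mul x (mul y z) = mul (mul x y) z + mul y (mul x z))].

(* lpow mul x j = x^j for j >= 1, with x^1 = x and x^(j+1) = x x^j.
   (lpow mul x 0 = 0 is an unused convention.) *)
Fixpoint lpow (K : fieldType) (V : vectType K) (mul : V -> V -> V) (x : V) (j : nat) : V :=
  match j with
  | 0 => 0
  | j'.+1 => if j' is 0 then x else mul x (lpow mul x j')
  end.

Definition is_generator (K : fieldType) (V : vectType K) (mul : V -> V -> V)
  (n : nat) (x : V) : bool :=
  basis_of fullv [seq lpow mul x j | j <- iota 1 n].

(* Main.v *)
Require Import Defs.
From HB Require Import structures.
From mathcomp Require Import all_boot all_order all_algebra.
From mathcomp Require Import reals.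
From mathcomp.real_closed Require Import complex.
Import GRing.Theory.
Local Open Scope ring_scope.
From mathcomp Require Import zify.
Set Implicit Arguments. Unset Strict Implicit.
Lemma mulr0L (K : fieldType) (V : vectType K) (mul : V -> V -> V) :
  leibniz_algebra mul -> forall x, mul x 0 = 0.
Proof.
rewrite /leibniz_algebra => -[] _ hR _ x; have := hR 1 x 0 0; rewrite !scale1r addr0 => h.
by apply/esym/(addrI (mul x 0)); rewrite addr0 -h.
Qed.

Lemma mul0lL (K : fieldType) (V : vectType K) (mul : V -> V -> V) :
  leibniz_algebra mul -> forall z, mul 0 z = 0.
Proof.
rewrite /leibniz_algebra => -[] hL _ _ z; have := hL 1 0 0 z; rewrite !scale1r addr0 => h.
by apply/esym/(addrI (mul 0 z)); rewrite addr0 -h.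
Qed.

Lemma mulDlL (K : fieldType) (V : vectType K) (mul : V -> V -> V) :
  leibniz_algebra mul -> forall u v z, mul (u + v) z = mul u z + mul v z.
Proof. by rewrite /leibniz_algebra => -[] hL _ _ u v z; have := hL 1 u v z; rewrite !scale1r. Qed.

Lemma mulZlL (K : fieldType) (V : vectType K) (mul : V -> V -> V) :
  leibniz_algebra mul -> forall c u z, mul (c *: u) z = c *: mul u z.
Proof.
move=> hA c u z; have [hL _ _] := hA : leibniz_algebra mul; have := hL c u 0 z.
by rewrite addr0 (mul0lL hA) addr0.
Qed.

Lemma mulDrL (K : fieldType) (V : vectType K) (mul : V -> V -> V) :
  leibniz_algebra mul -> forall x u v, mul x (u + v) = mul x u + mul x v.
Proof. by rewrite /leibniz_algebra => -[] _ hR _ x u v; have := hR 1 x u v; rewrite !scale1r. Qed.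

Lemma mulZrL (K : fieldType) (V : vectType K) (mul : V -> V -> V) :
  leibniz_algebra mul -> forall x c u, mul x (c *: u) = c *: mul x u.
Proof.
move=> hA x c u; have [_ hR _] := hA : leibniz_algebra mul; have := hR c x u 0.
by rewrite addr0 (mulr0L hA) addr0.
Qed.

Lemma iterL0 (K : fieldType) (V : vectType K) (mul : V -> V -> V) :
  leibniz_algebra mul -> forall a m, iter m (mul a) 0 = 0.
Proof. by move=> hA a; elim=> //= m ->; rewrite (mulr0L hA). Qed.

Lemma iterLD (K : fieldType) (V : vectType K) (mul : V -> V -> V) :
  leibniz_algebra mul -> forall a m u v,
  iter m (mul a) (u + v) = iter m (mul a) u + iter m (mul a) v.
Proof. by move=> hA a; elim=> //= m IH u v; rewrite IH (mulDrL hA). Qed.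

Lemma iterLZ (K : fieldType) (V : vectType K) (mul : V -> V -> V) :
  leibniz_algebra mul -> forall a m c u,
  iter m (mul a) (c *: u) = c *: iter m (mul a) u.
Proof. by move=> hA a; elim=> //= m IH c u; rewrite IH (mulZrL hA). Qed.

Lemma iterL_sum (K : fieldType) (V : vectType K) (mul : V -> V -> V) :
  leibniz_algebra mul -> forall a m (I : Type) (r : seq I) (P : pred I) (F : I -> V),
  iter m (mul a) (\sum_(i <- r | P i) F i) = \sum_(i <- r | P i) iter m (mul a) (F i).
Proof.
move=> hA a m I r P F.
exact: (big_morph (iter m (mul a)) (iterLD hA a m) (iterL0 hA a m)).
Qed.

Lemma mul_suml (K : fieldType) (V : vectType K) (mul : V -> V -> V) :
  leibniz_algebra mul -> forall z (I : Type) (r : seq I) (P : pred I) (F : I -> V),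
  mul (\sum_(i <- r | P i) F i) z = \sum_(i <- r | P i) mul (F i) z.
Proof.
move=> hA z I r P F.
exact: (big_morph (fun y => mul y z) (fun u v => mulDlL hA u v z) (mul0lL hA z)).
Qed.

Lemma lpow_iter (K : fieldType) (V : vectType K) (mul : V -> V -> V) x j :
  lpow mul x j.+1 = iter j (mul x) x.
Proof. by elim: j => //= j <-. Qed.

Lemma mul_lpow0 (K : fieldType) (V : vectType K) (mul : V -> V -> V) :
  leibniz_algebra mul -> forall a j z, (2 <= j)%N -> mul (lpow mul a j) z = 0.
Proof.
move=> hA a; have [_ _ hJ] := hA : leibniz_algebra mul.
elim=> // j IH z; rewrite ltnS leq_eqVlt => /orP [/eqP <-|hj] /=.
  have := hJ a a z => h; apply/(addIr (mul a (mul a z))).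
  by rewrite add0r -h.
have := hJ a (lpow mul a j) z; rewrite IH // (mulr0L hA).
case: j IH hj => [|j] // IH hj; rewrite IH // addr0 => h.
by rewrite -h.
Qed.
Lemma mul_comb (K : fieldType) (V : vectType K) (mul : V -> V -> V) :
  leibniz_algebra mul -> forall (n : nat) (c : nat -> K) a z, (0 < n)%N ->
  mul (\sum_(1 <= i < n.+1) c i *: lpow mul a i) z = c 1%N *: mul a z.
Proof.
move=> hA n c a z hn; rewrite (mul_suml hA) big_ltn ?ltnS //.
rewrite big_nat_cond big1 ?addr0 ?(mulZlL hA) // => i /andP[/andP[hi _] _].
by rewrite (mulZlL hA) (mul_lpow0 hA) ?scaler0.
Qed.

Lemma iter_rel (K : fieldType) (V : vectType K) (mul : V -> V -> V) :
  leibniz_algebra mul -> forall (n k : nat) (alpha c : nat -> K) a, (0 < n)%N -> (0 < k)%N ->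
  mul a (lpow mul a n) = \sum_(k <= i < n.+1) alpha i *: lpow mul a i ->
  let y := \sum_(1 <= j < n.+1) c j *: lpow mul a j in
  iter n (mul a) y = \sum_(k <= i < n.+1) alpha i *: iter i.-1 (mul a) y.
Proof.
move=> hA n k alpha c a hn hk H y.
have H1 : iter n (mul a) a = \sum_(k <= i < n.+1) alpha i *: lpow mul a i.
  by case: n hn H {y} => // n _ H; rewrite iterS -lpow_iter.
have step : forall j, iter n (mul a) (iter j (mul a) a)
   = \sum_(k <= i < n.+1) alpha i *: iter i.-1 (mul a) (iter j (mul a) a).
  move=> j; rewrite -iterD addnC iterD H1 (iterL_sum hA).
  apply: eq_big_nat => i /andP[hi _]; rewrite (iterLZ hA).
  case: i hi => [|i] hi; first by move: (leq_trans hk hi).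
  by rewrite lpow_iter -!iterD addnC.
have ey : y = \sum_(1 <= j < n.+1) c j *: iter j.-1 (mul a) a.
  by apply: eq_big_nat => -[|j] //= _; rewrite -lpow_iter.
rewrite ey (iterL_sum hA).
under eq_bigr => j _ do rewrite (iterLZ hA) step scaler_sumr.
rewrite exchange_big /=; apply: eq_bigr => i _.
rewrite (iterL_sum hA) scaler_sumr; apply: eq_bigr => j _.
by rewrite (iterLZ hA) !scalerA mulrC.
Qed.

Lemma xpow (K : fieldType) (V : vectType K) (mul : V -> V -> V) :
  leibniz_algebra mul -> forall a x (c1 : K), (forall z, mul x z = c1 *: mul a z) ->
  forall j, lpow mul x j.+1 = c1 ^+ j *: iter j (mul a) x.
Proof.
move=> hA a x c1 hx j; rewrite lpow_iter; elim: j => [|j IH]; first by rewrite scale1r.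
by rewrite !iterS IH hx (mulZrL hA) scalerA -exprS.
Qed.

Lemma part1 (K : fieldType) (V : vectType K) (mul : V -> V -> V)
  (n k : nat) (a : V) (alpha : nat -> K) :
  leibniz_algebra mul -> (2 <= k <= n)%N ->
  mul a (lpow mul a n) = \sum_(k <= i < n.+1) alpha i *: lpow mul a i ->
  (forall (c : nat -> K) (x : V),
     x = \sum_(1 <= i < n.+1) c i *: lpow mul a i ->
     mul x (lpow mul x n)
       = \sum_(k <= i < n.+1) (c 1%N ^+ (n - i).+1 * alpha i) *: lpow mul x i).
Proof.
move=> hA /andP[hk hkn] H c x ex.
have hn : (0 < n)%N by apply: leq_trans hkn; apply: leq_trans hk.
have hk1 : (0 < k)%N by apply: leq_trans hk.
have hx : forall z, mul x z = c 1%N *: mul a z by move=> z; rewrite ex mul_comb.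
have hr := iter_rel hA c hn hk1 H; rewrite -ex in hr.
case: n hn hkn H hr ex => [|n] // _ hkn H hr ex.
rewrite (xpow hA hx) hx (mulZrL hA) scalerA -exprS -iterS hr scaler_sumr.
apply: eq_big_nat => i /andP[hi hin].
case: i hi hin => [|i] hi hin; first by move: (leq_trans hk1 hi).
rewrite (xpow hA hx) /= scalerA scalerA; congr (_ *: _).
rewrite mulrAC -exprD; congr (_ * _); congr (_ ^+ _).
rewrite ltnS in hin; rewrite subSS; lia.
Qed.

Lemma part2 (K : fieldType) (V : vectType K) (mul : V -> V -> V)
  (n k : nat) (a : V) (alpha : nat -> K) :
  leibniz_algebra mul ->
  \dim (fullv : {vspace V}) = n ->
  is_generator mul n a ->
  (2 <= k <= n)%N ->
  mul a (lpow mul a n) = \sum_(k <= i < n.+1) alpha i *: lpow mul a i ->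
  (forall c1 : K, c1 != 0 ->
     exists c : nat -> K,
       c 1%N = c1 /\
       let x := \sum_(1 <= i < n.+1) c i *: lpow mul a i in
       is_generator mul n x /\
       mul x (lpow mul x n)
         = \sum_(k <= i < n.+1) (c1 ^+ (n - i).+1 * alpha i) *: lpow mul x i).
Proof.
move=> hA hdim hg hkn H c1 hc1.
have hn : (0 < n)%N by move: (hkn) => /andP[h1 h2]; apply: leq_trans h2; apply: leq_trans h1.
exists (fun i => if i == 1%N then c1 else 0); split; first by [].
move=> x; split; last exact: (part1 hA hkn H (erefl x)).
have ex : x = c1 *: a.
  rewrite /x big_ltn ?ltnS // /= big_nat_cond big1 ?addr0 // => i /andP[/andP[hi _] _].
  by rewrite gtn_eqF // scale0r.
have hx : forall z, mul x z = c1 *: mul a z by move=> z; rewrite ex (mulZlL hA).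
have px : forall j, lpow mul x j.+1 = c1 ^+ j.+1 *: lpow mul a j.+1.
  by move=> j; rewrite (xpow hA hx) ex (iterLZ hA) scalerA -exprSr lpow_iter.
rewrite /is_generator basisEdim size_map size_iota hdim leqnn andbT.
rewrite -(span_basis hg); apply/span_subvP => v /mapP [j hj ->].
case: j hj => [|j]; first by rewrite mem_iota.
move=> hj; have -> : lpow mul a j.+1 = (c1 ^+ j.+1)^-1 *: lpow mul x j.+1.
  by rewrite px scalerA mulVf ?scale1r // expf_neq0.
by apply: memvZ; apply: memv_span; apply: map_f.
Qed.

Theorem lemma3p2 (R : realType) (V : vectType R[i]) (mul : V -> V -> V)
  (n k : nat) (a : V) (alpha : nat -> R[i]) :
  leibniz_algebra mul ->
  \dim (fullv : {vspace V}) = n ->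
  is_generator mul n a ->
  (2 <= k <= n)%N ->
  alpha k != 0 ->
  mul a (lpow mul a n) = \sum_(k <= i < n.+1) alpha i *: lpow mul a i ->
  (forall (c : nat -> R[i]) (x : V),
     x = \sum_(1 <= i < n.+1) c i *: lpow mul a i ->
     is_generator mul n x ->
     mul x (lpow mul x n)
       = \sum_(k <= i < n.+1) (c 1%N ^+ (n - i).+1 * alpha i) *: lpow mul x i)
  /\
  (forall c1 : R[i], c1 != 0 ->
     exists c : nat -> R[i],
       c 1%N = c1 /\
       let x := \sum_(1 <= i < n.+1) c i *: lpow mul a i in
       is_generator mul n x /\
       mul x (lpow mul x n)
         = \sum_(k <= i < n.+1) (c1 ^+ (n - i).+1 * alpha i) *: lpow mul x i).
Proof.
move=> hA hdim hg hkn _ H; split.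
  by move=> c x ex _; exact: (part1 hA hkn H ex).
exact: (part2 hA hdim hg hkn H).
Qed.
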